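(* If $R$ is a Mori domain that is finitely stable, then $R$ is an LPI-domain with finite character.
   Context: Let $R$ be an integral domain with quotient field $K\neq R$. For a nonzero ideal $I$, $(R:I)=\{x\in K: xI\subseteq R\}$ and $I_v=(R:(R:I))$; $I$ is divisorial if $I=I_v$. $R$ is a Mori domain if it satisfies the ascending chain condition on divisorial integral ideals. An ideal $I$ is locally principal if $IR_M$ is principal for every maximal ideal $M$; invertible if $I(R:I)=R$. $R$ is an LPI-domain if every locally principal nonzero ideal is invertible. A nonzero ideal $I$ is stable if it is invertible as an ideal of $(I:I)=\{x\in K: xI\subseteq I\}$; $R$ is finitely stable if every nonzero finitely generated ideal is stable. $R$ has finite character if every nonzero element lies in only finitely many maximal ideals. *)

(* Defs.v *)
(* An integral domain R is represented as a subring S of a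
   field K such that K is the quotient field of S.  Subsets of K are
   predicates K -> Prop; set equality is extensional (<->). *)
From HB Require Import structures.
From mathcomp Require Import all_boot all_order all_algebra.
Set Implicit Arguments. Unset Strict Implicit. Unset Printing Implicit Defensive.
Import Order.TTheory GRing.Theory Num.Theory.
Local Open Scope ring_scope.

Section Defs.
Variable K : fieldType.
Implicit Types (S I J M T A B : K -> Prop).

Definition seteq A B := forall x, A x <-> B x.
Definition subset A B := forall x, A x -> B x.

Definition is_domain_in S :=
  [/\ S 0, S 1,
      (forall x y, S x -> S y -> S (x - y)),
      (forall x y, S x -> S y -> S (x * y)) &
      (forall x, exists a b, [/\ S a, S b, b != 0 & x = a / b])].
Definition proper_in S := exists x : K, ~ S x.

Definition dideal S I :=
  [/\ subset I S, I 0,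
      (forall x y, I x -> I y -> I (x + y)) &
      (forall r x, S r -> I x -> I (r * x))].
Definition nonzero I := exists x, I x /\ x != 0.

Definition colon A B : K -> Prop := fun x => forall y, B y -> A (x * y).
Definition vclos S I := colon S (colon S I).
Definition divisorial S I := seteq I (vclos S I).

Definition is_mori S :=
  forall Is : nat -> (K -> Prop),
    (forall n, dideal S (Is n) /\ nonzero (Is n) /\ divisorial S (Is n)) ->
    (forall n, subset (Is n) (Is n.+1)) ->
    exists n, forall m, (n <= m)%N -> seteq (Is m) (Is n).

Definition mulset A B : K -> Prop := fun x =>
  exists n (a b : nat -> K),
    (forall k, (k < n)%N -> A (a k) /\ B (b k)) /\
    x = \sum_(k < n) a k * b k.

Definition maximal_ideal S M :=
  [/\ dideal S M, ~ M 1 &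
      forall J, dideal S J -> subset M J -> seteq J M \/ seteq J S].

Definition loc S M : K -> Prop := fun x =>
  exists a s, [/\ S a, S s, ~ M s & x = a / s].
Definition ext_loc S M I : K -> Prop := fun x =>
  exists i s, [/\ I i, S s, ~ M s & x = i / s].

Definition locally_principal S I :=
  forall M, maximal_ideal S M ->
    exists g, seteq (ext_loc S M I) (fun x => exists r, loc S M r /\ x = g * r).

Definition invertible_in T I := seteq (mulset I (colon T I)) T.
Definition invertible S I := invertible_in S I.

Definition is_LPI S :=
  forall I, dideal S I -> nonzero I -> locally_principal S I -> invertible S I.

Definition stable I := invertible_in (colon I I) I.

Definition fin_gen S I :=
  exists n (g : nat -> K), (forall k, (k < n)%N -> S (g k)) /\
    seteq I (fun x => exists r : nat -> K,
               (forall k, (k < n)%N -> S (r k)) /\ x = \sum_(k < n) r k * g k).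

Definition finitely_stable S :=
  forall I, dideal S I -> nonzero I -> fin_gen S I -> stable I.

Definition finite_character S :=
  forall x, S x -> x != 0 ->
    exists n (Ms : nat -> (K -> Prop)),
      forall M, maximal_ideal S M -> M x ->
        exists k, (k < n)%N /\ seteq M (Ms k).
End Defs.

(* Main.v *)
Require Import Defs.
From HB Require Import structures.
From mathcomp Require Import all_boot all_order all_algebra ring.
From Stdlib Require Import Classical ClassicalEpsilon.
Require Import Defs.
Set Implicit Arguments. Unset Strict Implicit. Unset Printing Implicit Defensive.
Import Order.TTheory GRing.Theory Num.Theory.
Local Open Scope ring_scope.
Set Bullet Behavior "Strict Subproofs".


Lemma dom_add (K : fieldType) (S : K -> Prop) : is_domain_in S ->
  forall x y, S x -> S y -> S (x + y).
Proof.
move=> [S0 S1 Ssub Smul _] x y Sx Sy.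
have -> : x + y = x - (0 - y) by rewrite sub0r opprK.
by apply: (Ssub) => //; apply: (Ssub).
Qed.

Lemma dom_sum (K : fieldType) (S : K -> Prop) : is_domain_in S ->
  forall n (F : 'I_n -> K), (forall k, S (F k)) -> S (\sum_(k < n) F k).
Proof.
move=> D n F HF; apply: (big_ind S) => //; first by case: D.
by move=> x y; apply: dom_add.
Qed.

Lemma dideal_sum (K : fieldType) (S I : K -> Prop) : dideal S I ->
  forall n (F : 'I_n -> K), (forall k, I (F k)) -> I (\sum_(k < n) F k).
Proof.
case=> _ I0 Iadd _ n F HF; exact: (big_ind I).
Qed.

Lemma colon_anti (K : fieldType) (A B B' : K -> Prop) :
  subset B B' -> subset (colon A B') (colon A B).
Proof. by move=> h x hx y /h; apply: hx. Qed.

Lemma sub_vclos (K : fieldType) (S I : K -> Prop) : subset I (vclos S I).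
Proof. by move=> x Ix u hu; rewrite mulrC; apply: hu. Qed.

Lemma vclos_mono (K : fieldType) (S I J : K -> Prop) :
  subset I J -> subset (vclos S I) (vclos S J).
Proof. by move=> h; apply: colon_anti; apply: colon_anti. Qed.

Lemma vclos_idem (K : fieldType) (S I : K -> Prop) :
  subset (vclos S (vclos S I)) (vclos S I).
Proof.
move=> x hx u hu; apply: hx => z hz; rewrite mulrC; exact: hz.
Qed.

Lemma one_colon (K : fieldType) (S I : K -> Prop) : subset I S -> colon S I 1.
Proof. by move=> h y /h; rewrite mul1r. Qed.

Lemma vclos_sub (K : fieldType) (S I : K -> Prop) : subset I S -> subset (vclos S I) S.
Proof. by move=> h x hx; rewrite -[x]mulr1; apply: hx; apply: one_colon. Qed.

Lemma colon_dideal (K : fieldType) (S A B : K -> Prop) : is_domain_in S ->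
  dideal S A -> subset (colon A B) (colon A B) /\
  (colon A B 0) /\ (forall x y, colon A B x -> colon A B y -> colon A B (x + y)) /\
  (forall r x, S r -> colon A B x -> colon A B (r * x)).
Proof.
move=> D [AS A0 Aadd Amul]; split=> //; split; first by move=> y _; rewrite mul0r.
split; first by move=> x y hx hy z Bz; rewrite mulrDl; apply: Aadd; [apply: hx|apply: hy].
by move=> r x Sr hx z Bz; rewrite -mulrA; apply: Amul => //; apply: hx.
Qed.

Lemma S_dideal (K : fieldType) (S : K -> Prop) : is_domain_in S -> dideal S S.
Proof.
move=> D; have [S0 S1 Ssub Smul _] := D; split.
- by [].
- by [].
- by move=> x y; apply: dom_add.
- by move=> r x; apply: Smul.
Qed.

Lemma vclos_dideal (K : fieldType) (S I : K -> Prop) : is_domain_in S ->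
  subset I S -> dideal S (vclos S I).
Proof.
move=> D IS; have [_ [h0 [hadd hmul]]] := colon_dideal (colon S I) D (S_dideal D).
by split=> //; apply: vclos_sub.
Qed.

Lemma vclos_divisorial (K : fieldType) (S I : K -> Prop) : divisorial S (vclos S I).
Proof. move=> x; split; [apply: sub_vclos | apply: vclos_idem]. Qed.



Definition gen (K : fieldType) (S : K -> Prop) (n : nat) (g : nat -> K) : K -> Prop :=
  fun x => exists r : nat -> K,
    (forall k, (k < n)%N -> S (r k)) /\ x = \sum_(k < n) r k * g k.

Definition ext (K : fieldType) (g : nat -> K) (n : nat) (y : K) : nat -> K :=
  fun k => if (k < n)%N then g k else y.

Lemma gen_sub (K : fieldType) (S I : K -> Prop) n g : dideal S I ->
  (forall k, (k < n)%N -> I (g k)) -> subset (gen S n g) I.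
Proof.
move=> DI hg x [r [hr ->]]; apply: (dideal_sum DI) => k.
by case: DI => _ _ _ Imul; apply: Imul; [apply: hr | apply: hg].
Qed.

Lemma gen_dideal (K : fieldType) (S : K -> Prop) n g : is_domain_in S ->
  (forall k, (k < n)%N -> S (g k)) -> dideal S (gen S n g).
Proof.
move=> D hg; have [S0 S1 Ssub Smul _] := D; split.
- by apply: gen_sub => //; apply: S_dideal.
- by exists (fun _ => 0); split=> // ; rewrite big1 // => k _; rewrite mul0r.
- move=> x y [r [hr ->]] [r' [hr' ->]]; exists (fun k => r k + r' k); split.
    by move=> k hk; apply: dom_add => //; [apply: hr|apply: hr'].
  by rewrite -big_split /=; apply: eq_bigr => k _; rewrite mulrDl.
- move=> s x Ss [r [hr ->]]; exists (fun k => s * r k); split.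
    by move=> k hk; apply: Smul => //; apply: hr.
  by rewrite mulr_sumr; apply: eq_bigr => k _; rewrite mulrA.
Qed.

Lemma gen_ext_mono (K : fieldType) (S : K -> Prop) n g y : S 0 ->
  subset (gen S n g) (gen S n.+1 (ext g n y)).
Proof.
move=> S0 x [r [hr ->]]; exists (ext r n 0); split.
  by move=> k hk; rewrite /ext; case: ifP => // /hr.
rewrite big_ord_recr /= /ext ltnn mul0r addr0.
by apply: eq_bigr => k _; rewrite /= ltn_ord.
Qed.

Lemma gen_ext_last (K : fieldType) (S : K -> Prop) n g y : S 0 -> S 1 ->
  gen S n.+1 (ext g n y) y.
Proof.
move=> S0 S1; exists (fun k => if k == n then 1 else 0); split.
  by move=> k _; case: ifP.
rewrite big_ord_recr /= eqxx mul1r /ext ltnn big1 ?add0r // => k _.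
by rewrite /= ltn_eqF ?mul0r.
Qed.

Lemma gen_one (K : fieldType) (S : K -> Prop) x : S 1 -> gen S 1 (fun _ => x) x.
Proof. by move=> S1; exists (fun _ => 1); split=> //; rewrite big_ord1 mul1r. Qed.

Lemma K1 (K : fieldType) (S J : K -> Prop) : finitely_stable S ->
  fin_gen S J -> dideal S J -> nonzero J -> subset (colon S J) S -> J 1.
Proof.
move=> FS fg DJ nzJ hc.
have st := FS J DJ nzJ fg.
have T1 : colon J J 1 by move=> y Jy; rewrite mul1r.
have [n [a [b [hab ->]]]] := (proj2 (st 1) T1).
apply: (dideal_sum DJ) => k.
have [Ja Tb] := hab k (ltn_ord k).
have [JS _ _ Jmul] := DJ.
rewrite mulrC; apply: Jmul => //; apply: (hc) => y Jy.
have hT := Tb y Jy.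
by apply: (hc) => z Jz; apply: JS; apply: hT.
Qed.




Lemma acc_gen (K : fieldType) (S : K -> Prop) (Q : (K -> Prop) -> Prop) :
  is_mori S ->
  (forall D, Q D -> dideal S D /\ nonzero D /\ divisorial S D) ->
  (forall D, Q D -> exists D', Q D' /\ subset D D' /\ ~ subset D' D) ->
  forall D, ~ Q D.
Proof.
move=> M hQ hstep D0 QD0.
have hex : forall D, exists D', Q D -> Q D' /\ subset D D' /\ ~ subset D' D.
  move=> D; case: (classic (Q D)) => [QD|nQD]; last by exists D.
  by have [D' hD'] := hstep D QD; exists D'.
pose f := fun D => proj1_sig (constructive_indefinite_description _ (hex D)).
have hf : forall D, Q D -> Q (f D) /\ subset D (f D) /\ ~ subset (f D) D.
  by move=> D; rewrite /f; case: constructive_indefinite_description.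
pose Is := fun n => iter n f D0.
have QI : forall n, Q (Is n) by elim=> [|n IH] //=; apply: (proj1 (hf _ IH)).
have [n hn] := M Is (fun n => hQ _ (QI n)) (fun n => proj1 (proj2 (hf _ (QI n)))).
have [_ [_ hns]] := hf _ (QI n); apply: hns => x hx.
by apply: (proj1 (hn n.+1 (leqnSn n) x)).
Qed.

Lemma ML (K : fieldType) (S A : K -> Prop) : is_domain_in S -> is_mori S ->
  dideal S A -> nonzero A ->
  exists n g, (forall k, (k < n)%N -> A (g k)) /\ nonzero (gen S n g) /\
    subset (colon S (gen S n g)) (colon S A).
Proof.
move=> D M DA [x [Ax nx]].
have [S0 S1 Ssub Smul _] := D.
have [AS A0 Aadd Amul] := DA.
apply: NNPP => H.
pose Q := fun D0 : K -> Prop => exists n g, (forall k, (k < n)%N -> A (g k)) /\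
   nonzero (gen S n g) /\ D0 = vclos S (gen S n g).
apply: (@acc_gen K S Q M _ _ (vclos S (gen S 1 (fun _ => x)))).
- move=> D0 [n [g [hg [nz ->]]]]; split.
    apply: vclos_dideal => //; apply: gen_sub; first exact: S_dideal.
    by move=> k /hg /AS.
  split; last exact: vclos_divisorial.
  by case: nz => z [hz nz]; exists z; split=> //; apply: sub_vclos.
- move=> D0 [n [g [hg [nz ->]]]].
  have : ~ subset (colon S (gen S n g)) (colon S A).
    by move=> hs; apply: H; exists n, g.
  move=> /not_all_ex_not [u] hu0.
  have [hu hnu] := imply_to_and _ _ hu0.
  have [y hy0] := not_all_ex_not _ _ hnu.
  have [Ay nuy] := imply_to_and _ _ hy0.
  have nvy : ~ vclos S (gen S n g) y by move=> hv; apply: nuy; rewrite mulrC; apply: hv.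
  exists (vclos S (gen S n.+1 (ext g n y))); split.
    exists n.+1, (ext g n y); split; last split => //.
      by move=> k hk; rewrite /ext; case: ifP => // /hg.
    case: nz => z [hz nz]; exists z; split=> //; exact: gen_ext_mono.
  split; first by apply: vclos_mono; apply: gen_ext_mono.
  move=> hs; apply: nvy; apply: hs; apply: sub_vclos; exact: gen_ext_last.
- exists 1%N, (fun _ => x); split; first by [].
  split=> //; exists x; split=> //; exact: gen_one.
Qed.




Lemma Lv (K : fieldType) (S B : K -> Prop) : is_domain_in S -> is_mori S ->
  finitely_stable S -> dideal S B -> nonzero B -> ~ B 1 -> ~ vclos S B 1.
Proof.
move=> D M FS DB nzB nB1 hv; apply: nB1.
have [n [g [hg [nz hc]]]] := ML D M DB nzB.
have [BS _ _ _] := DB.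
have hgS : forall k, (k < n)%N -> S (g k) by move=> k /hg /BS.
apply: (gen_sub DB hg).
apply: (K1 FS) => //.
- by exists n, g; split => // x.
- exact: gen_dideal.
- by move=> u /hc /hv; rewrite mul1r.
Qed.

Lemma max_prime (K : fieldType) (S M : K -> Prop) : is_domain_in S ->
  maximal_ideal S M -> forall a b, S a -> S b -> M (a * b) -> ~ M a -> M b.
Proof.
move=> D [[MS M0 Madd Mmul] nM1 hmax] a b Sa Sb Mab nMa.
have [S0 S1 Ssub Smul _] := D.
pose J := fun z => exists m r, [/\ M m, S r & z = m + r * a].
have DJ : dideal S J.
{ split.
  - move=> z [m [r [Mm Sr ->]]]; apply: dom_add => //; first exact: MS.
    exact: Smul.
  - by exists 0, 0; split=> //; rewrite mul0r addr0.
  - move=> x y [m [r [Mm Sr ->]]] [m' [r' [Mm' Sr' ->]]].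
    exists (m + m'), (r + r'); split.
    + exact: Madd.
    + exact: dom_add.
    + by rewrite mulrDl; rewrite addrACA.
  - move=> s x Ss [m [r [Mm Sr ->]]]; exists (s * m), (s * r); split.
    + exact: Mmul.
    + exact: Smul.
    + by rewrite mulrDr mulrA. }
have MJ : subset M J by move=> z Mz; exists z, 0; split=> //; rewrite mul0r addr0.
case: (hmax J DJ MJ) => [hJ | hJ].
- exfalso; apply: nMa; apply/hJ; exists 0, 1; split=> //; by rewrite mul1r add0r.
- have [m [r [Mm Sr e1]]] := proj2 (hJ 1) S1.
  have -> : b = b * m + r * (a * b).
    by rewrite -[b in LHS]mul1r {1}e1; ring.
  apply: Madd; first by apply: Mmul.
  exact: Mmul.
Qed.

Lemma K2 (K : fieldType) (S A : K -> Prop) : is_domain_in S -> is_mori S ->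
  finitely_stable S -> dideal S A -> nonzero A ->
  A 1 \/ exists P, maximal_ideal S P /\ subset A P.
Proof.
move=> D M FS DA nzA.
case: (classic (A 1)) => [|nA1]; [by left | right].
have [S0 S1 Ssub Smul _] := D.
apply: NNPP => H.
pose Q := fun D0 : K -> Prop => [/\ dideal S D0, nonzero D0, divisorial S D0,
   ~ D0 1 & subset A D0].
have [AS _ _ _] := DA.
apply: (@acc_gen K S Q M _ _ (vclos S A)).
- by move=> D0 [? ? ? _ _].
- move=> D0 [DD0 nzD0 dD0 nD1 AD0].
  have nmax : ~ maximal_ideal S D0 by move=> mx; apply: H; exists D0.
  have : ~ forall J, dideal S J -> subset D0 J -> seteq J D0 \/ seteq J S.
    by move=> h; apply: nmax; split.
  move=> /not_all_ex_not [J hJ0].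
  have [DJ hJ1] := imply_to_and _ _ hJ0.
  have [DJs hJ2] := imply_to_and _ _ hJ1.
  have [nJD nJS] := not_or_and _ _ hJ2.
  have [JS _ _ Jmul] := DJ.
  have nJ1 : ~ J 1.
    move=> J1; apply: nJS => z; split; first exact: JS.
    by move=> Sz; rewrite -[z]mulr1; apply: Jmul.
  have [z hz] : exists z, J z /\ ~ D0 z.
    apply: NNPP => hn; apply: nJD => z; split; last exact: DJs.
    by move=> Jz; apply: NNPP => nDz; apply: hn; exists z.
  have nzJ : nonzero J by case: nzD0 => w [hw nw]; exists w; split=> //; apply: DJs.
  exists (vclos S J); split; [split|split].
  + exact: vclos_dideal.
  + by case: nzJ => w [hw nw]; exists w; split=> //; apply: sub_vclos.
  + exact: vclos_divisorial.
  + exact: (Lv D M FS DJ nzJ nJ1).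
  + by move=> w /AD0 /DJs; apply: sub_vclos.
  + by move=> w /DJs; apply: sub_vclos.
  + by move=> hs; apply: (proj2 hz); apply: hs; apply: sub_vclos; apply: (proj1 hz).
- split.
  + exact: vclos_dideal.
  + by case: nzA => w [hw nw]; exists w; split=> //; apply: sub_vclos.
  + exact: vclos_divisorial.
  + exact: (Lv D M FS DA nzA nA1).
  + exact: sub_vclos.
Qed.

Lemma max_div (K : fieldType) (S P : K -> Prop) : is_domain_in S -> is_mori S ->
  finitely_stable S -> maximal_ideal S P -> nonzero P -> divisorial S P.
Proof.
move=> D M FS mP nzP.
have [DP nP1 hmax] := mP.
have [PS _ _ _] := DP.
have := hmax _ (vclos_dideal D PS) (@sub_vclos _ S P).
case=> h.
- by move=> x; split; [apply: sub_vclos | apply: (proj1 (h x))].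
- exfalso; apply: (Lv D M FS DP nzP nP1); apply: (proj2 (h 1)); by case: D.
Qed.




Lemma mulset_dideal (K : fieldType) (S I : K -> Prop) : is_domain_in S ->
  dideal S I -> dideal S (mulset I (colon S I)).
Proof.
move=> D DI; have [S0 S1 Ssub Smul _] := D; have [IS I0 Iadd Imul] := DI.
split.
- move=> x [n [a [b [hab ->]]]]; apply: (dom_sum D) => k.
  have [Ia Cb] := hab k (ltn_ord k); rewrite mulrC; exact: Cb.
- by exists 0%N, (fun _ => 0), (fun _ => 0); split=> //; rewrite big_ord0.
- move=> x y [n [a [b [hab ->]]]] [m [a' [b' [hab' ->]]]].
  exists (n + m)%N, (fun k => if (k < n)%N then a k else a' (k - n)%N),
    (fun k => if (k < n)%N then b k else b' (k - n)%N); split.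
  + move=> k hk; case: ifP => hkn; first exact: hab.
    apply: hab'; rewrite ltn_subLR //; rewrite leqNgt hkn //.
  + rewrite big_split_ord /=; congr (_ + _); apply: eq_bigr => k _ /=.
    * by rewrite ltn_ord.
    * by rewrite ltnNge leq_addr /= addKn.
- move=> r x Sr [n [a [b [hab ->]]]]; exists n, (fun k => r * a k), b; split.
  + by move=> k hk; have [? ?] := hab k hk; split=> //; apply: Imul.
  + by rewrite mulr_sumr; apply: eq_bigr => k _; rewrite mulrA.
Qed.

Lemma LPI_part (K : fieldType) (S : K -> Prop) : is_domain_in S -> is_mori S ->
  finitely_stable S -> is_LPI S.
Proof.
move=> D M FS I DI nzI lpI.
have [S0 S1 Ssub Smul _] := D; have [IS I0 Iadd Imul] := DI.
have DA := mulset_dideal D DI.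
have [AS A0 Aadd Amul] := DA.
have [x [Ix nx]] := nzI.
have C1 : colon S I 1 by apply: one_colon.
have Ain : forall i u, I i -> colon S I u -> mulset I (colon S I) (i * u).
  move=> i u Ii Cu; exists 1%N, (fun _ => i), (fun _ => u); split=> //.
  by rewrite big_ord1.
have nzA : nonzero (mulset I (colon S I)).
  by exists x; split=> //; rewrite -[x]mulr1; apply: (Ain).
suff A1 : mulset I (colon S I) 1.
  move=> z; split; first exact: AS.
  by move=> Sz; rewrite -[z]mulr1; apply: Amul.
case: (K2 D M FS DA nzA) => // [[P [mP AP]]].
exfalso.
have [[PS P0 _ Pmul] nP1 _] := mP.
have [g hg] := lpI P mP.
have loc1 : loc S P 1 by exists 1, 1; split=> //; rewrite divr1.
have [r [_ xg]] := proj1 (hg x) (ex_intro _ x (ex_intro _ 1 (And4 Ix S1 nP1 (esym (divr1 x))))).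
have gn0 : g != 0 by apply: contraNneq nx => g0; rewrite xg g0 mul0r.
have [i [s [Ii Ss nPs gis]]] := proj2 (hg g) (ex_intro _ 1 (conj loc1 (esym (mulr1 g)))).
have sn0 : s != 0 by apply: contraPneq nPs => ->.
have in0 : i != 0.
  by apply: contraNneq gn0 => i0; rewrite gis i0 mul0r.
have [n [h [hh [nzg hc]]]] := ML D M DI nzI.
have key : forall m, (m <= n)%N -> exists t, [/\ S t, ~ P t &
    forall k, (k < m)%N -> S (t * h k / i)].
{ elim=> [|m IH] hm.
    by exists 1; split=> // k.
  have [t [St nPt ht]] := IH (ltnW hm).
  have Ihm := hh m hm.
  have [r' [[a [s' [Sa Ss' nPs' ->]]] hme]] :=
    proj1 (hg (h m)) (ex_intro _ (h m) (ex_intro _ 1 (And4 Ihm S1 nP1 (esym (divr1 _))))).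
  have s'n0 : s' != 0 by apply: contraPneq nPs' => ->.
  exists (t * (s * s')); split.
  - by apply: (Smul) => //; apply: (Smul).
  - move=> Pt; have Pss := max_prime D mP St (Smul _ _ Ss Ss') Pt nPt.
    exact: nPs' (max_prime D mP Ss Ss' Pss nPs).
  - move=> k; rewrite ltnS leq_eqVlt => /orP [/eqP -> | hk].
    + rewrite hme gis.
      have -> : t * (s * s') * (i / s * (a / s')) / i = t * a by field; rewrite sn0 s'n0 in0.
      exact: (Smul).
    + have -> : t * (s * s') * h k / i = (s * s') * (t * h k / i) by ring.
      by apply: (Smul); [apply: (Smul) | apply: ht]. }
have [t [St nPt ht]] := key n (leqnn n).
have Cu : colon S I (t / i).
  apply: hc => z [rr [hrr ->]].
  rewrite mulr_sumr; apply: (dom_sum D) => k.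
  have -> : t / i * (rr k * h k) = rr k * (t * h k / i) by ring.
  by apply: (Smul); [apply: hrr | apply: ht].
apply: nPt; apply: AP.
have -> : t = i * (t / i) by field.
exact: (Ain).
Qed.




Lemma FC_part (K : fieldType) (S : K -> Prop) : is_domain_in S -> is_mori S ->
  finitely_stable S -> finite_character S.
Proof.
move=> D Mo FS x Sx nx.
have [S0 S1 Ssub Smul _] := D.
apply: NNPP => H.
have hch : forall n (f : nat -> (K -> Prop)), exists M, maximal_ideal S M /\ M x /\
    forall k, (k < n)%N -> ~ seteq M (f k).
  move=> n f; apply: NNPP => hn; apply: H; exists n, f => M mM Mx.
  apply: NNPP => hk; apply: hn; exists M; split=> //; split=> // k kn hs.
  by apply: hk; exists k.
pose ch := fun n f => proj1_sig (constructive_indefinite_description _ (hch n f)).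
have chP : forall n f, maximal_ideal S (ch n f) /\ ch n f x /\
    forall k, (k < n)%N -> ~ seteq (ch n f) (f k).
  by move=> n f; rewrite /ch; case: constructive_indefinite_description.
pose Fs := nat_rect (fun _ => nat -> (K -> Prop)) (fun _ => S)
  (fun n F => fun k => if k == n then ch n F else F k).
pose Ms := fun n => ch n (Fs n).
have FsE : forall n k, (k < n)%N -> Fs n k = Ms k.
  elim=> [|n IH] k //= hk.
  case: eqP => [-> //|nk]; apply: IH.
  by rewrite ltn_neqAle; apply/andP; split; [apply/eqP | rewrite -ltnS].
have MsP : forall n, [/\ maximal_ideal S (Ms n), Ms n x &
    forall k, (k < n)%N -> ~ seteq (Ms n) (Ms k)].
  move=> n; have [h1 [h2 h3]] := chP n (Fs n); split=> // k hk.
  by rewrite -(FsE n k hk); apply: h3.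
pose Dn := fun n z => forall k, (k < n.+1)%N -> Ms k z.
pose X := fun v => exists w, S w /\ v = x * w.
pose En := fun n => colon X (Dn n).
have DnS : forall n, subset (Dn n) S.
  move=> n z hz; have [[[MS _ _ _] _ _] _ _] := MsP 0%N; apply: MS; exact: hz.
have Dnx : forall n, Dn n x by move=> n k _; have [_ ? _] := MsP k.
have cancel_x : forall a b, x * a = x * b -> a = b.
  by move=> a b; apply: mulfI.
have EnS : forall n, subset (En n) S.
  move=> n z hz; have [w [Sw e]] := hz x (Dnx n).
  by rewrite (cancel_x z w) // mulrC.
have EnD : forall n, dideal S (En n).
{ move=> n; split.
  - exact: EnS.
  - by move=> y _; exists 0; split=> //; rewrite mul0r mulr0.
  - move=> a b ha hb y hy.
    have [w [Sw ew]] := ha y hy; have [w' [Sw' ew']] := hb y hy.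
    by exists (w + w'); split; [apply: dom_add | rewrite mulrDl ew ew' mulrDr].
  - move=> r a Sr ha y hy; have [w [Sw ew]] := ha y hy.
    by exists (r * w); split; [apply: (Smul) | rewrite -mulrA ew mulrCA]. }
have Enx : forall n, En n x.
  by move=> n y hy; exists y; split=> //; apply: DnS hy.
have EnDiv : forall n, divisorial S (En n).
  move=> n z; split; first exact: sub_vclos.
  move=> hz y hy.
  have hyx : colon S (En n) (y / x).
    move=> e he; have [w [Sw ew]] := he y hy.
    have -> : y / x * e = w by apply: (cancel_x); rewrite -ew; field.
    exact: Sw.
  exists (z * (y / x)); split; first exact: hz.
  by field.
have Einc : forall n, subset (En n) (En n.+1).
  move=> n; apply: colon_anti => z hz k hk; apply: hz; exact: ltnW.
have [N hN] := Mo En (fun n => conj (EnD n) (conj (ex_intro _ x (conj (Enx n) nx)) (EnDiv n))) Einc.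
have hE : subset (En N.+1) (En N) by move=> z hz; apply: (proj1 (hN N.+1 (leqnSn N) z)).
pose Q := Ms N.+1.
have [mQ Qx hQ] := MsP N.+1.
have [[QS Q0 _ Qmul] nQ1 Qmax] := mQ.
have divQ : divisorial S Q.
  by apply: (max_div D Mo FS mQ); exists x; split.
have DQ : subset (Dn N) Q.
  move=> d hd; apply: (proj2 (divQ d)).
  apply: (@vclos_mono _ S (Dn N.+1) Q); first by move=> z hz; apply: hz.
  move=> u hu.
  have hxu : En N.+1 (x * u).
    move=> y hy; exists (u * y); split; [exact: hu | by rewrite mulrA].
  have [w [Sw ew]] := hE _ hxu d hd.
  rewrite mulrC (cancel_x (u * d) w) //; by rewrite mulrA.
have key : forall m, (m <= N.+1)%N -> exists t, [/\ S t, ~ Q t &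
    forall k, (k < m)%N -> Ms k t].
{ elim=> [|m IH] hm.
    by exists 1; split=> // k.
  have [t [St nQt ht]] := IH (ltnW hm).
  have [mM _ _] := MsP m.
  have [[MS _ _ Mmul] nM1 Mmax] := mM.
  have [a [Ma nQa]] : exists a, Ms m a /\ ~ Q a.
  { apply: NNPP => hn.
    have sub : subset (Ms m) Q.
      by move=> z Mz; apply: NNPP => nQz; apply: hn; exists z.
    have DQd : dideal S Q by case: mQ.
    case: (Mmax Q DQd sub) => hs.
    - exact: (hQ m hm) hs.
    - by apply: nQ1; apply: (proj2 (hs 1)). }
  have Sa := MS a Ma.
  exists (t * a); split.
  - exact: (Smul).
  - by move=> Qta; apply: nQa; apply: (max_prime D mQ St Sa Qta nQt).
  - move=> k; rewrite ltnS leq_eqVlt => /orP [/eqP -> | hk].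
    + by apply: Mmul.
    + have [[[MkS _ _ Mkmul] _ _] _ _] := MsP k.
      by rewrite mulrC; apply: Mkmul => //; apply: ht. }
have [t [St nQt ht]] := key N.+1 (leqnn _).
by apply: nQt; apply: DQ => k hk; apply: ht.
Qed.


Theorem mainTheorem6 (K : fieldType) (S : K -> Prop) :
  is_domain_in S -> proper_in S ->
  is_mori S -> finitely_stable S ->
  is_LPI S /\ finite_character S.
Proof.
move=> D _ M FS; split; [exact: LPI_part | exact: FC_part].
Qed.
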